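(* Let $(\Omega,\mathcal{F},\mathbb{P})$ be a probability space with a filtration $\{\mathcal{F}_n\}_{n=0}^\infty$, let $U$ be a stopping time with respect to $\{\mathcal{F}_n\}_{n=0}^\infty$, and let $\{X_n\}_{n=0}^\infty$ be a martingale (resp. supermartingale) adapted to $\{\mathcal{F}_n\}_{n=0}^\infty$. Put $Y=X_U$. Suppose there exist real numbers $M,c_1,c_2,d>0$ such that (i) for all sufficiently large $n\in\mathbb{N}$, $\mathbb{P}(U>n)\le c_1\cdot e^{-c_2\cdot n}$, and (ii) for all $n\in\mathbb{N}$, $|X_{n+1}-X_n|\le M\cdot n^d$ almost surely. Then $\mathbb{E}(|Y|)<\infty$ and $\mathbb{E}(Y)=\mathbb{E}(X_0)$ (resp. $\mathbb{E}(Y)\le\mathbb{E}(X_0)$).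
   Context: A stopping time with respect to $\{\mathcal{F}_n\}$ is a random variable $U:\Omega\to\mathbb{N}\cup\{0,\infty\}$ with $\{U\le n\}\in\mathcal{F}_n$ for all $n$. A process $\{X_n\}$ adapted to $\{\mathcal{F}_n\}$ is a martingale (resp. supermartingale) if $\mathbb{E}(|X_n|)<\infty$ for all $n$ and $\mathbb{E}(X_{n+1}\mid\mathcal{F}_n)=X_n$ (resp. $\le X_n$) almost surely. $X_U$ denotes the random variable $\omega\mapsto X_{U(\omega)}(\omega)$ (well defined almost surely, since condition (i) implies $U<\infty$ a.s.). *)

(* Defs.v *)
From HB Require Import structures.
From mathcomp Require Import all_boot all_order all_algebra.
From mathcomp Require Import all_classical all_reals all_analysis.
Set Implicit Arguments. Unset Strict Implicit. Unset Printing Implicit Defensive.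
Import Order.TTheory GRing.Theory Num.Theory.
Local Open Scope classical_set_scope.
Local Open Scope ring_scope.

Section defs.
Context {d : measure_display} {T : measurableType d} {R : realType}.

Definition filtration (F : nat -> set (set T)) : Prop :=
  (forall n, sigma_algebra setT (F n)) /\
  (forall n A, F n A -> measurable A) /\
  (forall n A, F n A -> F n.+1 A).

(** Values in N u {0, oo}: [Some k] is k, [None] is oo. *)
Definition stopping_time (F : nat -> set (set T)) (U : T -> option nat) : Prop :=
  forall n, F n [set w | exists2 k, U w = Some k & (k <= n)%N].

Definition U_gt (U : T -> option nat) (n : nat) : set T :=
  [set w | match U w with Some k => (n < k)%N | None => True end].

Definition measurable_wrt (G : set (set T)) (f : T -> R) : Prop :=
  forall B : set R, measurable B -> G (f @^-1` B).

Definition adapted (F : nat -> set (set T)) (X : nat -> T -> R) : Prop :=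
  forall n, measurable_wrt (F n) (X n).

(** Martingale: adapted, integrable, and E(X_{n+1} | F_n) = X_n a.s., stated
    through the defining property of conditional expectation:
    for every A in F_n, E(X_{n+1} 1_A) = E(X_n 1_A). *)
Definition martingale (P : probability T R) (F : nat -> set (set T))
  (X : nat -> T -> R) : Prop :=
  adapted F X /\ (forall n, P.-integrable setT (EFin \o X n)) /\
  (forall n A, F n A ->
     (\int[P]_(w in A) (X n.+1 w)%:E = \int[P]_(w in A) (X n w)%:E)%E).

Definition supermartingale (P : probability T R) (F : nat -> set (set T))
  (X : nat -> T -> R) : Prop :=
  adapted F X /\ (forall n, P.-integrable setT (EFin \o X n)) /\
  (forall n A, F n A ->
     (\int[P]_(w in A) (X n.+1 w)%:E <= \int[P]_(w in A) (X n w)%:E)%E).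

(** X_U, defined (arbitrarily as 0) on the null set {U = oo}. *)
Definition stopped_value (X : nat -> T -> R) (U : T -> option nat) : T -> R :=
  fun w => match U w with Some k => X k w | None => 0 end.

End defs.

(* Main.v *)
Require Import Defs.
From HB Require Import structures.
From mathcomp Require Import all_boot all_order all_algebra.
From mathcomp Require Import all_classical all_reals all_analysis.
From mathcomp Require Import measurable_realfun.
From mathcomp Require Import ring lra.
Import Order.TTheory GRing.Theory Num.Theory.
Import numFieldNormedType.Exports.
Local Open Scope classical_set_scope.
Local Open Scope ring_scope.

Lemma geo_fin (R : realType) (a q : R) : 0 <= a -> 0 < q -> q < 1 ->
  (\sum_(k <oo) (a * q ^+ k)%:E < +oo)%E.
Proof.
move=> a0 q0 q1.
apply: (@le_lt_trans _ _ (a * (1 - q)^-1)%:E); last exact: ltry.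
apply: lime_le.
  by apply: is_cvg_nneseries => n _ _; rewrite lee_fin mulr_ge0 // exprn_ge0 // ltW.
apply: nearW => n; rewrite sumEFin lee_fin.
have := @geometric_le_lim R n a q a0 q0; rewrite gtr0_norm // => /(_ q1).
by [].
Qed.

Lemma pow_bound (R : realType) (e c : R) : 0 < e -> 0 < c ->
  exists C : R, 0 < C /\ forall k : nat, (0 < k)%N ->
    k%:R `^ e <= C * expR (c * k%:R).
Proof.
move=> e0 c0; pose s := c / e.
have s0 : 0 < s by rewrite divr_gt0.
exists (expR (- (e * ln s))); split; first exact: expR_gt0.
move=> k k0; have kR : 0 < k%:R :> R by rewrite ltr0n.
rewrite /powR (negbTE (lt0r_neq0 kR)) -expRD ler_expR.
have h : ln (s * k%:R) < s * k%:R by apply: ln_sublinear; rewrite mulr_gt0.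
rewrite lnM ?posrE // in h.
have : e * (ln s + ln k%:R) <= e * (s * k%:R) by rewrite ler_pM2l // ltW.
rewrite mulrDr /s mulrA mulrCA divff ?lt0r_neq0 // mulr1.
move=> h2; rewrite mulrC; lra.
Qed.

Section proof.
Context (d : measure_display) (T : measurableType d) (R : realType)
  (P : probability T R) (F : nat -> set (set T)) (U : T -> option nat).
Hypothesis hF : filtration F.
Hypothesis hU : stopping_time F U.

Let Ule n := [set w | exists2 k, U w = Some k & (k <= n)%N].

Lemma Ugt_C n : U_gt U n = setT `\` Ule n.
Proof.
apply/seteqP; split => w; rewrite /U_gt /Ule /=.
  case: (U w) => [k|] Hk; split => //= -[k' Hk' Hle].
  - case: Hk' => ?; subst k'. by rewrite leqNgt Hk in Hle.
  - by [].
case: (U w) => [k|] [_ H] //; rewrite ltnNge; apply/negP => Hk; apply: H; by exists k.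
Qed.

Lemma FUgt n : F n (U_gt U n).
Proof. rewrite Ugt_C; have [/(_ n) [_ HC _] _] := hF; exact: HC. Qed.

Lemma mUgt n : measurable (U_gt U n).
Proof. have [_ [Hm _]] := hF; exact: Hm (FUgt n). Qed.

Lemma mUle n : measurable (Ule n).
Proof. have [_ [Hm _]] := hF; exact: Hm (hU n). Qed.


Definition Yn (X : nat -> T -> R) n w :=
  match U w with Some k => X (minn k n) w | None => X n w end.
Definition Dn (X : nat -> T -> R) n : T -> R :=
  patch (fun=> 0) (U_gt U n) (fun w => X n.+1 w - X n w).

Lemma Yn0 X w : Yn X 0 w = X 0%N w.
Proof. by rewrite /Yn; case: (U w) => // k; rewrite minn0. Qed.

Lemma YnS X n w : Yn X n.+1 w = Yn X n w + Dn X n w.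
Proof.
rewrite /Dn /patch /Yn; case: ifPn => [/set_mem|/negP Hn]; rewrite /U_gt.
  case E: (U w) => [k|] //= => [nk|_].
  - move: nk; rewrite /= E => nk; rewrite (minn_idPr (ltnW nk)) (minn_idPr nk); by rewrite addrC subrK.
  - by rewrite addrC subrK.
case E: (U w) => [k|] //=.
  case: (ltnP n k) => kn.
    by exfalso; apply: Hn; apply: mem_set; rewrite /U_gt /= E.
  by rewrite (minn_idPl (leqW kn)) addr0.
by exfalso; apply: Hn; apply: mem_set; rewrite /U_gt /= E.
Qed.

Lemma EDn X n : EFin \o Dn X n = (EFin \o (fun w => X n.+1 w - X n w)) \_ (U_gt U n).
Proof. by apply/funext => w; rewrite /Dn /patch /=; case: ifP. Qed.

Section integ.
Variable X : nat -> T -> R.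
Hypothesis iX : forall n, P.-integrable setT (EFin \o X n).

Let mX n : measurable_fun setT (X n).
Proof. by apply/measurable_EFinP; exact: measurable_int (iX n). Qed.

Lemma iDiff n : P.-integrable setT (EFin \o (fun w => X n.+1 w - X n w)).
Proof.
rewrite (_ : _ \o _ = (EFin \o X n.+1) \- (EFin \o X n))%E; last by apply/funext.
by apply: integrableB.
Qed.

Lemma iDn n : P.-integrable setT (EFin \o Dn X n).
Proof.
rewrite EDn; apply/(integrable_mkcond _ (mUgt n)).
exact: (integrableS measurableT (mUgt n)) (iDiff n).
Qed.

Lemma iYn n : P.-integrable setT (EFin \o Yn X n).
Proof.
elim: n => [|n IH].
  by rewrite (_ : _ \o _ = EFin \o X 0%N) //; apply/funext => w /=; rewrite Yn0.
rewrite (_ : _ \o _ = (EFin \o Yn X n) \+ (EFin \o Dn X n))%E; last first.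
  by apply/funext => w /=; rewrite YnS.
by apply: integrableD => //; exact: iDn.
Qed.

Lemma mYn n : measurable_fun setT (Yn X n).
Proof. by apply/measurable_EFinP; exact: measurable_int (iYn n). Qed.

Lemma intYnS n : (\int[P]_w (Yn X n.+1 w)%:E = \int[P]_w (Yn X n w)%:E +
  (\int[P]_(w in U_gt U n) (X n.+1 w)%:E - \int[P]_(w in U_gt U n) (X n w)%:E))%E.
Proof.
rewrite (_ : (fun w => _) = (EFin \o Yn X n) \+ (EFin \o Dn X n))%E; last first.
  by apply/funext => w /=; rewrite YnS.
rewrite integralD_EFin //; [|exact: iYn|exact: iDn].
congr (_ + _)%E.
rewrite -integralB_EFin; [|exact: mUgt| |]; last 2 first.
- exact: (integrableS measurableT (mUgt n)) (iX _).
- exact: (integrableS measurableT (mUgt n)) (iX _).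
rewrite [RHS]integral_mkcond EDn.
by apply: eq_integral => x _; rewrite /patch /=; case: ifP.
Qed.
End integ.

Definition UNone := [set w | U w = None].

Lemma mUNone : measurable UNone.
Proof.
rewrite (_ : UNone = \bigcap_n U_gt U n).
  by apply: bigcapT_measurable => n; exact: mUgt.
apply/seteqP; split => w; rewrite /UNone /U_gt /=.
  by move=> H n _; rewrite /= H.
move=> H; have := H 0%N I; rewrite /=; case E: (U w) => [k|] // _.
by have := H k I; rewrite /= E ltnn.
Qed.

Section tail.
Variables (c1 c2 : R) (N : nat).
Hypothesis hc1 : 0 < c1.
Hypothesis hc2 : 0 < c2.
Hypothesis hN : forall n, (N <= n)%N -> (P (U_gt U n) <= (c1 * expR (- (c2 * n%:R)))%:E)%E.

Lemma PUNone : P UNone = 0%E.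
Proof.
apply/le_anti; rewrite measure_ge0 andbT.
apply/lee_addgt0Pr => eps eps0; rewrite add0e.
pose n := maxn N (Num.truncn (c1 / (c2 * eps))).+1.
have Bn : (P UNone <= P (U_gt U n))%E.
  apply: le_measure; rewrite ?inE; [exact: mUNone|exact: mUgt|].
  by move=> w; rewrite /UNone /U_gt /= => ->.
apply: (le_trans Bn); apply: (le_trans (@hN n (leq_maxl _ _))); rewrite lee_fin.
rewrite expRN -[X in X <= _]/(c1 / expR (c2 * n%:R)) ler_pdivrMr ?expR_gt0 //.
have h1 : c1 / (c2 * eps) < n%:R.
  apply: (lt_le_trans (Num.Theory.truncnS_gt _)); rewrite ler_nat; exact: leq_maxr.
have h2 : c1 < eps * (c2 * n%:R).
  rewrite ltr_pdivrMr ?mulr_gt0 // in h1; by rewrite mulrCA mulrA mulrC.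
apply: (le_trans (ltW h2)); rewrite ler_pM2l //.
apply: le_trans (expR_ge1Dx _); by rewrite lerDr.
Qed.
End tail.

Section dom.
Variable X : nat -> T -> R.
Hypothesis iX : forall n, P.-integrable setT (EFin \o X n).
Variables (M e c1 c2 : R) (N : nat).
Hypotheses (hM : 0 < M) (he : 0 < e) (hc1 : 0 < c1) (hc2 : 0 < c2).
Hypothesis hN : forall n, (N <= n)%N -> (P (U_gt U n) <= (c1 * expR (- (c2 * n%:R)))%:E)%E.
Hypothesis hae : forall n : nat, (0 < n)%N ->
        {ae P, forall w, `|X n.+1 w - X n w| <= M * n%:R `^ e}.

Definition gdom w := ((`|X 0%N w|)%:E + \sum_(k <oo) (`|Dn X k w|)%:E)%E.

Lemma Yn_le_real n w : `|Yn X n w| <= `|X 0%N w| + \sum_(0 <= k < n) `|Dn X k w|.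
Proof.
elim: n => [|n IH]; first by rewrite Yn0 big_geq // addr0.
rewrite YnS big_nat_recr //= addrA; apply: (le_trans (ler_normD _ _)).
by rewrite lerD2r.
Qed.

Lemma Yn_le n w : ((`|Yn X n w|)%:E <= gdom w)%E.
Proof.
apply: (le_trans (_ : _ <= (`|X 0%N w| + \sum_(0 <= k < n) `|Dn X k w|)%:E)%E).
  by rewrite lee_fin Yn_le_real.
rewrite /gdom EFinD leeD2l // -sumEFin.
by apply: nneseries_lim_ge => k _ _; rewrite lee_fin.
Qed.

Lemma tail_all : exists c1', 0 < c1' /\
  forall k, (P (U_gt U k) <= (c1' * expR (- (c2 * k%:R)))%:E)%E.
Proof.
exists ((c1 + 1) * expR (c2 * N%:R)); split.
  by rewrite mulr_gt0 ?expR_gt0 // addr_gt0.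
have E1 : 1 <= expR (c2 * N%:R).
  apply: le_trans (expR_ge1Dx _); rewrite lerDl mulr_ge0 // ltW //.
move=> k; have E2 := expR_gt0 (- (c2 * k%:R)).
case: (leqP N k) => Nk.
  apply: (le_trans (@hN k Nk)); rewrite lee_fin ler_pM2r //.
  apply: (@le_trans _ _ (c1 + 1)); first by rewrite lerDl.
  by rewrite -[leLHS]mulr1 ler_pM2l // addr_gt0.
apply: (le_trans (probability_le1 _ (mUgt k))); rewrite lee_fin -mulrA -expRD.
have E3 : 1 <= expR (c2 * N%:R + - (c2 * k%:R)).
  apply: le_trans (expR_ge1Dx _); rewrite lerDl -mulrBr; apply: mulr_ge0; first exact: ltW.
  by rewrite subr_ge0 ler_nat ltnW.
apply: (le_trans E3); rewrite -[leLHS]mul1r ler_pM2r ?expR_gt0 // lerDr; exact: ltW.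
Qed.
Lemma mabsDn k : measurable_fun setT (fun w => (`|Dn X k w|)%:E).
Proof.
have mD : measurable_fun setT (Dn X k).
  by apply/measurable_EFinP; exact: measurable_int (@iDn X iX k).
by apply/measurable_EFinP; apply: measurableT_comp => //.
Qed.

Lemma int_Dn_le k (c1' : R) :
  (forall k, (P (U_gt U k) <= (c1' * expR (- (c2 * k%:R)))%:E)%E) -> (0 < k)%N ->
  (\int[P]_w (`|Dn X k w|)%:E <= (M * k%:R `^ e * (c1' * expR (- (c2 * k%:R))))%:E)%E.
Proof.
move=> hc k0.
have c0 : 0 <= M * k%:R `^ e by rewrite mulr_ge0 ?powR_ge0 // ltW.
apply: (@le_trans _ _ (\int[P]_w ((cst (M * k%:R `^ e)%:E) \_ (U_gt U k)) w)%E).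
  apply: ae_ge0_le_integral => //.
  - exact: mabsDn.
  - by move=> w _; rewrite /patch; case: ifP => // _; rewrite lee_fin.
  - by apply/(measurable_restrictT _ (mUgt k)) => //.
  have := @hae k k0; apply: filterS => w Hw _; rewrite /Dn /patch; case: ifP => _ //=.
  by rewrite normr0.
rewrite -integral_mkcond integral_cst; last exact: mUgt.
rewrite [leRHS]EFinM; apply: lee_wpmul2l; [by rewrite lee_fin|exact: hc].
Qed.

Lemma term_bound : exists a q : R, [/\ 0 <= a, 0 < q, q < 1 &
  forall k, (\int[P]_w (`|Dn X k w|)%:E <= (a * q ^+ k)%:E)%E].
Proof.
have [c1' [c1'0 hc]] := tail_all.
have c20 : 0 < c2 / 2 by rewrite divr_gt0.
have [C [C0 hC]] := @pow_bound R e (c2/2) he c20.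
have fin0 : (\int[P]_w (`|Dn X 0%N w|)%:E)%E \is a fin_num.
  have /integrableP[_ h] := @iDn X iX 0.
  by rewrite ge0_fin_numE ?integral_ge0 // => w _; rewrite lee_fin.
set A := fine (\int[P]_w (`|Dn X 0%N w|)%:E)%E.
have A0 : 0 <= A by apply: fine_ge0; apply: integral_ge0 => w _; rewrite lee_fin.
have B0 : 0 <= M * C * c1' by rewrite !mulr_ge0 // ltW.
exists (A + M * C * c1'), (expR (- (c2 / 2))); split.
- by rewrite addr_ge0.
- exact: expR_gt0.
- by rewrite expR_lt1 oppr_lt0.
case=> [|k].
  by rewrite -[X in (X <= _)%E]fineK // lee_fin expr0 mulr1 lerDl.
apply: (le_trans (@int_Dn_le k.+1 c1' hc (ltn0Sn k))); rewrite lee_fin.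
have Ek : expR (c2 / 2 * k.+1%:R) * expR (- (c2 * k.+1%:R)) = expR (- (c2 / 2)) ^+ k.+1.
  by rewrite -expRD -expRM_natr; congr expR; field.
rewrite -Ek.
apply: (@le_trans _ _ (M * C * c1' * (expR (c2 / 2 * k.+1%:R) * expR (- (c2 * k.+1%:R))))).
  have -> : M * k.+1%:R `^ e * (c1' * expR (- (c2 * k.+1%:R))) =
    (M * c1' * expR (- (c2 * k.+1%:R))) * k.+1%:R `^ e by ring.
  have -> : M * C * c1' * (expR (c2 / 2 * k.+1%:R) * expR (- (c2 * k.+1%:R))) =
    (M * c1' * expR (- (c2 * k.+1%:R))) * (C * expR (c2 / 2 * k.+1%:R)) by ring.
  by rewrite ler_wpM2l ?hC // !mulr_ge0 ?expR_ge0 // ltW.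
by rewrite ler_wpM2r ?mulr_ge0 ?expR_ge0 // lerDr.
Qed.

Lemma mgdom : measurable_fun setT gdom.
Proof.
apply: emeasurable_funD.
  apply/measurable_EFinP; apply: measurableT_comp => //.
  by apply/measurable_EFinP; exact: measurable_int (iX 0).
apply: (@ge0_emeasurable_sum _ _ _ _ (fun k w => (`|Dn X k w|)%:E) xpredT) => // k _; exact: mabsDn.
Qed.

Lemma gdom_ge0 w : (0 <= gdom w)%E.
Proof. by rewrite adde_ge0 // ?lee_fin // nneseries_ge0 // => k _ _; rewrite lee_fin. Qed.

Lemma gdom_int : P.-integrable setT gdom.
Proof.
apply/integrableP; split; first exact: mgdom.
rewrite (eq_integral gdom); last by move=> w _; rewrite gee0_abs // gdom_ge0.
rewrite /gdom ge0_integralD //; last 3 first.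
- apply/measurable_EFinP; apply: measurableT_comp => //.
  by apply/measurable_EFinP; exact: measurable_int (iX 0).
- by move=> w _; rewrite nneseries_ge0 // => k _ _; rewrite lee_fin.
- apply: (@ge0_emeasurable_sum _ _ _ _ (fun k w => (`|Dn X k w|)%:E) xpredT) => // k _; exact: mabsDn.
apply: lte_add_pinfty.
  by have /integrableP[_ h] := iX 0.
rewrite integral_nneseries //; last by move=> k; exact: mabsDn.
have [a [q [a0 q0 q1 hb]]] := term_bound.
apply: le_lt_trans (@geo_fin R a q a0 q0 q1).
by apply: lee_nneseries => // k _ _; apply: integral_ge0 => w _; rewrite lee_fin.
Qed.

Lemma mY : measurable_fun setT (stopped_value X U).
Proof.
refine (@measurable_fun_cvg _ _ _ setT (fun m => patch (fun=> 0) (Ule m) (Yn X m)) _ _ _).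
  move=> m; apply/measurable_EFinP.
  rewrite (_ : _ \o _ = (EFin \o Yn X m) \_ (Ule m)); last first.
    by apply/funext => w; rewrite /patch /=; case: ifP.
  apply/(measurable_restrictT _ (mUle m)); apply: measurable_funS (measurable_int _ (@iYn X iX m)) => //.
move=> w _; rewrite /stopped_value; case E: (U w) => [k|].
  apply: cvg_near_cst; exists k => // m /= km.
  rewrite /patch /Yn E; case: ifPn => [_|/negP H]; first by rewrite (minn_idPl km).
  by exfalso; apply: H; apply: mem_set; exists k.
apply: cvg_near_cst; apply: nearW => m; rewrite /patch; case: ifPn => // /set_mem [k].
by rewrite E.
Qed.

Lemma DCT : P.-integrable setT (EFin \o stopped_value X U) /\
  (\int[P]_w (Yn X n w)%:E @[n --> \oo] --> \int[P]_w (stopped_value X U w)%:E)%E.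
Proof.
have [] := @dominated_convergence _ _ _ P setT measurableT (fun n => EFin \o Yn X n)
  (EFin \o stopped_value X U) gdom.
- by move=> n; apply/measurable_EFinP; exact: mYn.
- by apply/measurable_EFinP; exact: mY.
- exists UNone; split; [exact: mUNone|exact: (@PUNone c1 c2 N)|].
  move=> w /= Hw; rewrite /UNone /=; case E: (U w) => [k|] //; exfalso; apply: Hw => _.
  apply: cvg_near_cst; exists k => // m /= km.
  by rewrite /Yn /stopped_value E (minn_idPl km).
- exact: gdom_int.
- by apply: nearW => w n _; exact: Yn_le.
by move=> iY _ h; split.
Qed.

End dom.

Section final.
Variable X : nat -> T -> R.
Hypothesis iX : forall n, P.-integrable setT (EFin \o X n).

Let fin n A : measurable A -> (\int[P]_(w in A) (X n w)%:E)%E \is a fin_num.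
Proof.
move=> mA; apply: integrable_fin_num => //.
exact: (integrableS measurableT mA) (iX n).
Qed.

Lemma intYn0 : (\int[P]_w (Yn X 0 w)%:E = \int[P]_w (X 0%N w)%:E)%E.
Proof. by apply: eq_integral => w _; rewrite Yn0. Qed.

Lemma intYn_le (hs : forall n A, F n A ->
     (\int[P]_(w in A) (X n.+1 w)%:E <= \int[P]_(w in A) (X n w)%:E)%E) n :
  (\int[P]_w (Yn X n w)%:E <= \int[P]_w (X 0%N w)%:E)%E.
Proof.
elim: n => [|n IH]; first by rewrite intYn0.
rewrite intYnS //; apply: le_trans IH; rewrite -[leRHS]adde0 leeD2l //.
by rewrite sube_le0; apply: hs; exact: FUgt.
Qed.

Lemma intYn_eq (hs : forall n A, F n A ->
     (\int[P]_(w in A) (X n.+1 w)%:E = \int[P]_(w in A) (X n w)%:E)%E) n :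
  (\int[P]_w (Yn X n w)%:E = \int[P]_w (X 0%N w)%:E)%E.
Proof.
elim: n => [|n IH]; first by rewrite intYn0.
by rewrite intYnS // (hs _ _ (FUgt n)) subee ?adde0 //; apply: fin; exact: mUgt.
Qed.
End final.

Lemma main_sec (M c1 c2 e : R) :
  0 < M -> 0 < c1 -> 0 < c2 -> 0 < e ->
  (exists N : nat, forall n : nat, (N <= n)%N ->
     (P (U_gt U n) <= (c1 * expR (- (c2 * n%:R)))%:E)%E) ->
  (forall X : nat -> T -> R,
     martingale P F X ->
     (forall n : nat, (0 < n)%N ->
        {ae P, forall w, `|X n.+1 w - X n w| <= M * n%:R `^ e}) ->
     P.-integrable setT (EFin \o stopped_value X U) /\
     (\int[P]_w (stopped_value X U w)%:E = \int[P]_w (X 0%N w)%:E)%E) /\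
  (forall X : nat -> T -> R,
     supermartingale P F X ->
     (forall n : nat, (0 < n)%N ->
        {ae P, forall w, `|X n.+1 w - X n w| <= M * n%:R `^ e}) ->
     P.-integrable setT (EFin \o stopped_value X U) /\
     (\int[P]_w (stopped_value X U w)%:E <= \int[P]_w (X 0%N w)%:E)%E).
Proof.
move=> hM hc1 hc2 he [N hN]; split.
  move=> X [_ [iX hs]] hae.
  have [iY h] := @DCT X iX M e c1 c2 N hM he hc1 hc2 hN hae.
  split => //.
  rewrite -(cvg_lim _ h) //.
  rewrite (_ : (fun n => _) = cst (\int[P]_w (X 0%N w)%:E)%E); last first.
    by apply/funext => n; rewrite intYn_eq.
  by rewrite lim_cst.
move=> X [_ [iX hs]] hae.
have [iY h] := @DCT X iX M e c1 c2 N hM he hc1 hc2 hN hae.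
split => //.
rewrite -(cvg_lim _ h) //; apply: lime_le; first by apply/cvgP: h.
by apply: nearW => n; exact: intYn_le.
Qed.

End proof.


Theorem theorem5p2 (d : measure_display) (T : measurableType d) (R : realType)
  (P : probability T R) (F : nat -> set (set T)) (U : T -> option nat)
  (M c1 c2 e : R) :
  filtration F -> stopping_time F U ->
  0 < M -> 0 < c1 -> 0 < c2 -> 0 < e ->
  (exists N : nat, forall n : nat, (N <= n)%N ->
     (P (U_gt U n) <= (c1 * expR (- (c2 * n%:R)))%:E)%E) ->
  (forall X : nat -> T -> R,
     martingale P F X ->
     (forall n : nat, (0 < n)%N ->
        {ae P, forall w, `|X n.+1 w - X n w| <= M * n%:R `^ e}) ->
     P.-integrable setT (EFin \o stopped_value X U) /\
     (\int[P]_w (stopped_value X U w)%:E = \int[P]_w (X 0%N w)%:E)%E) /\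
  (forall X : nat -> T -> R,
     supermartingale P F X ->
     (forall n : nat, (0 < n)%N ->
        {ae P, forall w, `|X n.+1 w - X n w| <= M * n%:R `^ e}) ->
     P.-integrable setT (EFin \o stopped_value X U) /\
     (\int[P]_w (stopped_value X U w)%:E <= \int[P]_w (X 0%N w)%:E)%E).
Proof. move=> hF hU; exact: (@main_sec d T R P F U hF hU M c1 c2 e). Qed.
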